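(* Let $(X,d)$ be a pointed metric space and let $((x_i,y_i))_{i\in I}$ be a Lipschitz interpolating family in $\widetilde X$ for $\mathrm{Lip}_0(X)$ whose Lipschitz interpolation constant is $M$. The following are equivalent: (i) For every real Banach space $E$, $((x_i,y_i))_{i\in I}$ is a Lipschitz interpolating family for $\mathrm{Lip}_0(X,E)$ and its Lipschitz interpolation constant satisfies $M_E=M$. (ii) $((x_i,y_i))_{i\in I}$ has a Beurling set $(f_i)_{i\in I}$ of functions in $\mathrm{Lip}_0(X)$.
   Context: All spaces are real. $(X,d)$ is a metric space with base point $0$, $\widetilde{X}=\{(x,y)\in X\times X: x\neq y\}$. For a Banach space $E$, $\mathrm{Lip}_0(X,E)$ is the Banach space of Lipschitz $f:X\to E$ with $f(0)=0$, normed by $\|f\|=\sup_{(x,y)\in\widetilde X}\|f(x)-f(y)\|/d(x,y)$; $\mathrm{Lip}_0(X)=\mathrm{Lip}_0(X,\mathbb R)$. $\ell_\infty(I,E)$ is the space of bounded families in $E$ with sup norm. For a family $((x_i,y_i))_{i\in I}$ in $\widetilde X$, $T_E:\mathrm{Lip}_0(X,E)\to\ell_\infty(I,E)$ is $T_E(f)=\big((f(x_i)-f(y_i))/d(x_i,y_i)\big)_{i\in I}$; the family is Lipschitz interpolating for $\mathrm{Lip}_0(X,E)$ if $T_E$ is surjective, with constant $M_E=\inf\{K>0:\forall v\in\ell_\infty(I,E),\ \|v\|_\infty\le1,\ \exists f\in\mathrm{Lip}_0(X,E),\ \|f\|\le K,\ T_E(f)=v\}$. ''Lipschitz interpolating for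 $\mathrm{Lip}_0(X)$ with constant $M$'' is the case $E=\mathbb R$, with $M=\inf\{K\ge1:\dots\}$ defined analogously. A Beurling set of functions in $\mathrm{Lip}_0(X)$ for the family is a family $(f_i)_{i\in I}$ of functions $f_i:X\to\mathbb R$ with $f_i(0)=0$, $(f_i(x_j)-f_i(y_j))/d(x_j,y_j)=\delta_{ij}$ for all $i,j\in I$, and $\sup_{(x,y)\in\widetilde X}\sum_{i\in I}|f_i(x)-f_i(y)|/d(x,y)\leq M$. *)

(* Defs.v *)
From HB Require Import structures.
From mathcomp Require Import all_boot all_order all_algebra.
From mathcomp Require Import all_classical all_reals all_analysis.
From mathcomp Require Import Rstruct Rstruct_topology.
Set Implicit Arguments. Unset Strict Implicit. Unset Printing Implicit Defensive.
Import Order.TTheory GRing.Theory Num.Theory.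
Import numFieldNormedType.Exports.
Local Open Scope classical_set_scope.
Local Open Scope ring_scope.

Notation RR := Rdefinitions.R.

Definition is_metric (X : Type) (d : X -> X -> RR) : Prop :=
  (forall x y, 0 <= d x y) /\
  (forall x y, d x y = 0 <-> x = y) /\
  (forall x y, d x y = d y x) /\
  (forall x y z, d x z <= d x y + d y z).

Definition lip_le (X : Type) (d : X -> X -> RR) (E : normedModType RR)
  (f : X -> E) (K : RR) : Prop :=
  forall x y, x <> y -> `|f x - f y| / d x y <= K.

Definition in_Lip0 (X : Type) (d : X -> X -> RR) (x0 : X) (E : normedModType RR)
  (f : X -> E) : Prop :=
  f x0 = 0 /\ exists K, lip_le d f K.

Definition interp_eq (X I : Type) (d : X -> X -> RR) (xs ys : I -> X)
  (E : normedModType RR) (f : X -> E) (v : I -> E) : Prop :=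
  forall i, (d (xs i) (ys i))^-1 *: (f (xs i) - f (ys i)) = v i.

Definition lip_interpolating (X I : Type) (d : X -> X -> RR) (x0 : X)
  (xs ys : I -> X) (E : normedModType RR) : Prop :=
  forall v : I -> E, (exists B, forall i, `|v i| <= B) ->
    exists f : X -> E, in_Lip0 d x0 f /\ interp_eq d xs ys f v.

Definition interp_set (X I : Type) (d : X -> X -> RR) (x0 : X)
  (xs ys : I -> X) (E : normedModType RR) (P : RR -> Prop) : set RR :=
  [set K | P K /\ forall v : I -> E, (forall i, `|v i| <= 1) ->
     exists f : X -> E, in_Lip0 d x0 f /\ lip_le d f K /\ interp_eq d xs ys f v].

Definition interp_const (X I : Type) (d : X -> X -> RR) (x0 : X)
  (xs ys : I -> X) (E : normedModType RR) : RR :=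
  inf (interp_set d x0 xs ys E (fun K => 0 < K)).

Definition interp_const_R (X I : Type) (d : X -> X -> RR) (x0 : X)
  (xs ys : I -> X) : RR :=
  inf (interp_set d x0 xs ys RR^o (fun K => 1 <= K)).

(* Beurling set of functions with constant M; the (possibly infinite) sum of
   nonnegative terms sum_i |f_i x - f_i y| / d(x,y) <= M is expressed as:
   every finite sub-sum (over distinct indices) is <= M. *)
Definition beurling_set (X I : Type) (d : X -> X -> RR) (x0 : X)
  (xs ys : I -> X) (M : RR) (fs : I -> X -> RR) : Prop :=
  (forall i, fs i x0 = 0) /\
  (forall i j, (fs i (xs j) - fs i (ys j)) / d (xs j) (ys j) = (`[< i = j >] : bool)%:R) /\
  (forall x y, x <> y -> forall (n : nat) (g : 'I_n -> I), injective g ->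
     \sum_(k < n) `|fs (g k) x - fs (g k) y| / d x y <= M).

(* Main.v *)
Require Import Defs.
From HB Require Import structures.
From mathcomp Require Import all_boot all_order all_algebra.
From mathcomp Require Import all_classical all_reals all_analysis.
From mathcomp Require Import Rstruct Rstruct_topology.
From mathcomp Require Import ring lra.
Set Implicit Arguments. Unset Strict Implicit. Unset Printing Implicit Defensive.
Import Order.TTheory GRing.Theory Num.Theory.
Import numFieldNormedType.Exports.
Local Open Scope classical_set_scope.
Local Open Scope ring_scope.


Notation R := RR.

Definition fbnd (T : Type) (a : T -> R) (C : R) :=
  forall s : seq {classic T}, uniq s -> \sum_(t <- s) `|a t| <= C.

Lemma sum_split_sub (T : eqType) (V : nmodType) (f : T -> V) (s r : seq T) :
  uniq s -> uniq r -> {subset s <= r} ->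
  \sum_(t <- r) f t = \sum_(t <- s) f t + \sum_(t <- r | t \notin s) f t.
Proof.
move=> us ur sr; rewrite (bigID (mem s)) /=; congr (_ + _).
rewrite -big_filter; apply: perm_big; apply: uniq_perm => //.
  exact: filter_uniq.
by move=> t; rewrite mem_filter; apply/andP/idP => [[]//|ts]; split => //; apply: sr.
Qed.

Lemma sum_sub_le (T : eqType) (f : T -> R) (s r : seq T) :
  (forall t, 0 <= f t) -> uniq s -> uniq r -> {subset s <= r} ->
  \sum_(t <- s) f t <= \sum_(t <- r) f t.
Proof.
move=> f0 us ur sr; rewrite (sum_split_sub f us ur sr) lerDl.
by apply: sumr_ge0.
Qed.

Lemma inj_seq (T : Type) n (g : 'I_n -> T) : injective g ->
  uniq (map (g : 'I_n -> {classic T}) (enum 'I_n)) /\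
  forall (V : nmodType) (F : T -> V),
    \sum_(k < n) F (g k) = \sum_(t <- map (g : 'I_n -> {classic T}) (enum 'I_n)) F t.
Proof.
move=> gi; split.
  rewrite map_inj_uniq ?enum_uniq //.
by move=> V F; rewrite big_map big_enum.
Qed.

Lemma seq_inj (T : Type) (s : seq {classic T}) : uniq s ->
  exists n (g : 'I_n -> T), injective g /\
   forall (V : nmodType) (F : T -> V),
    \sum_(t <- s) F t = \sum_(k < n) F (g k).
Proof.
move=> us; exists (size s), (tnth (in_tuple s)); split.
  exact: (elimT (tuple_uniqP (in_tuple s))).
by move=> V F; rewrite big_tnth.
Qed.

Lemma fbnd_inj (T : Type) (a : T -> R) C :
  fbnd a C <-> (forall n (g : 'I_n -> T), injective g -> \sum_(k < n) `|a (g k)| <= C).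
Proof.
split.
  move=> h n g gi; have [u e] := inj_seq gi.
  by rewrite (e _ (fun t => `|a t|)); exact: h.
move=> h s us; have [n [g [gi e]]] := seq_inj us.
by rewrite (e _ (fun t => `|a t|)); exact: h.
Qed.

Lemma fbnd_ge0 (T : Type) (a : T -> R) C : fbnd a C -> 0 <= C.
Proof. by move=> h; have := h [::] isT; rewrite big_nil. Qed.

Lemma fbnd_le1 (T : Type) (a : T -> R) C t : fbnd a C -> `|a t| <= C.
Proof. by move=> h; have := h [:: (t : {classic T})] isT; rewrite big_seq1. Qed.

Section retraction.
Context (E : normedModType R) (e : E) (e1 : `|e| = 1).

Definition phiS (z : E) : set R := [set t + `|z - t *: e| | t in [set: R]].
Definition phi (z : E) : R := inf (phiS z).

Lemma phiS_ne z : phiS z !=set0.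
Proof. by exists (0 + `|z - 0 *: e|); exists 0. Qed.

Lemma phiS_lb z : lbound (phiS z) (- `|z|).
Proof.
move=> _ [t _ <-].
have h1 : `|t| - `|z| <= `|z - t *: e|.
  have := ler_normD (t *: e - z) z.
  by rewrite subrK normrZ e1 mulr1 distrC => h; rewrite lerBlDr.
have : - `|z| <= t + (`|t| - `|z|).
  suff : 0 <= t + `|t| by lra.
  case: (lerP 0 t) => ht.
    by rewrite ger0_norm // addr_ge0.
  by rewrite ltr0_norm // subrr.
move=> h2; apply: (le_trans h2); by rewrite lerD2l.
Qed.

Lemma phiS_hasinf z : has_inf (phiS z).
Proof. by split; [exact: phiS_ne | exists (- `|z|); exact: phiS_lb]. Qed.

Lemma phi_le z t : phi z <= t + `|z - t *: e|.
Proof. by apply: ge_inf; [exists (- `|z|); exact: phiS_lb | exists t]. Qed.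

Lemma phi_lip z w : phi z <= phi w + `|z - w|.
Proof.
rewrite -lerBlDr; apply: lb_le_inf; first exact: phiS_ne.
move=> _ [t _ <-]; rewrite lerBlDr.
apply: (le_trans (phi_le z t)); rewrite -addrA lerD2l.
have -> : z - t *: e = (w - t *: e) + (z - w) by rewrite [RHS]addrC addrA subrK.
exact: ler_normD.
Qed.

Lemma phi_lip2 z w : `|phi z - phi w| <= `|z - w|.
Proof.
rewrite ler_norml; apply/andP; split.
  by rewrite lerNl opprB lerBlDl distrC phi_lip.
by rewrite lerBlDl phi_lip.
Qed.

Lemma phi_trans_le z s : phi (z + s *: e) <= phi z + s.
Proof.
rewrite -lerBlDr; apply: lb_le_inf; first exact: phiS_ne.
move=> _ [t _ <-]; rewrite lerBlDr.
apply: (le_trans (phi_le _ (t + s))).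
have -> : z + s *: e - (t + s) *: e = z - t *: e.
  by rewrite scalerDl opprD addrACA subrr addr0.
by rewrite addrAC.
Qed.

Lemma phi_trans z s : phi (z + s *: e) = phi z + s.
Proof.
apply/eqP; rewrite eq_le phi_trans_le /=.
have := phi_trans_le (z + s *: e) (- s).
rewrite -addrA -scalerDl subrr scale0r addr0 => h; lra.
Qed.

End retraction.

Section metric.
Context (X : Type) (d : X -> X -> R) (dm : is_metric d).

Lemma d_ge0 x y : 0 <= d x y. Proof. by case: dm. Qed.
Lemma d_gt0 x y : x <> y -> 0 < d x y.
Proof.
move=> xy; rewrite lt_neqAle d_ge0 andbT; apply/eqP => h.
by case: dm => _ [h2 _]; apply: xy; apply/h2.
Qed.
Lemma d_xx x : d x x = 0. Proof. by case: dm => _ [h2 _]; apply/h2. Qed.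
Lemma d_sym x y : d x y = d y x. Proof. by case: dm => _ [_ []]. Qed.
End metric.

Section ER.
Context (X I : Type) (d : X -> X -> R) (x0 : X) (xs ys : I -> X)
  (dm : is_metric d) (xy : forall i, xs i <> ys i).

Lemma interp_scale (E : normedModType R) (f : X -> E) (v : I -> E) i :
  interp_eq d xs ys f v -> f (xs i) = f (ys i) + d (xs i) (ys i) *: v i.
Proof.
move=> h; have dn : d (xs i) (ys i) != 0 by rewrite gt_eqF // d_gt0.
by rewrite -(h i) scalerA (mulfV dn) scale1r addrC subrK.
Qed.

Lemma valid_E_R (E : normedModType R) (e : E) (K : R) : e <> 0 ->
  (forall v : I -> E, (forall i, `|v i| <= 1) ->
     exists f : X -> E, in_Lip0 d x0 f /\ lip_le d f K /\ interp_eq d xs ys f v) ->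
  (forall w : I -> R^o, (forall i, `|w i| <= 1) ->
     exists g : X -> R^o, in_Lip0 d x0 g /\ lip_le d g K /\ interp_eq d xs ys g w).
Proof.
move=> e0 hE w w1.
have ne : `|e| != 0 by rewrite normr_eq0; apply/eqP.
pose e1 := `|e|^-1 *: e.
have e11 : `|e1| = 1.
  by rewrite normrZ normrV ?unitfE // normr_id mulVf.
have hv : forall i, `|w i *: e1| <= 1 by move=> i; rewrite normrZ e11 mulr1.
have [f [[f0 _] [fl fi]]] := hE (fun i => w i *: e1) hv.
pose g x : R^o := phi e1 (f x) - phi e1 0.
have gl : lip_le d g K.
  move=> x y nxy; apply: le_trans (fl x y nxy).
  rewrite /g opprB addrA subrK; apply: ler_wpM2r.
    by rewrite invr_ge0 d_ge0.
  exact: phi_lip2.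
exists g; split; [|split] => //.
- by split; [rewrite /g f0 subrr | exists K].
- move=> i; rewrite /g (interp_scale i fi) scalerA phi_trans //.
  rewrite opprB addrA subrK [phi _ _ + _]addrC addrK.
  have dn : d (xs i) (ys i) != 0 by rewrite gt_eqF // d_gt0.
  by rewrite /GRing.scale /= mulrA (mulVf dn) mul1r.
Qed.
End ER.

Lemma banach_seq (E : completeNormedModType R) (u : nat -> E) (r : nat -> R) :
  (forall n m, (n <= m)%N -> `|u m - u n| <= r n) ->
  (forall e, 0 < e -> exists n, r n < e) ->
  exists S, forall n, `|S - u n| <= r n.
Proof.
move=> hu hr.
have : cvg (u @ \oo).
  apply/cauchy_cvgP/cauchyP => e e0.
  have [n hn] := hr e e0.
  exists (u n); exists n => // m /= nm.
  rewrite -ball_normE /ball_ /= distrC.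
  exact: le_lt_trans (hu _ _ nm) hn.
move/cvg_ex => [S /cvgrPdist_le hS]; exists S => n.
apply/ler_addgt0Pr => e e0.
have [N _ hN] := hS e e0.
have h1 := hN (maxn N n) (leq_maxl _ _).
have h2 := hu n (maxn N n) (leq_maxr _ _).
have h3 := ler_normD (S - u (maxn N n)) (u (maxn N n) - u n).
rewrite addrA subrK in h3.
apply: (le_trans h3); rewrite addrC; exact: lerD.
Qed.

Lemma sub4 (E : zmodType) (x y z w : E) : x - y - (z - w) = (x - z) - (y - w).
Proof. by rewrite !opprB addrACA [RHS]addrACA [- z + _]addrC. Qed.

Lemma le0_eps (x : R) : (forall e, 0 < e -> x <= e) -> x <= 0.
Proof. move=> h; apply/ler_addgt0Pr => e e0; rewrite add0r; exact: h. Qed.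


Lemma archi_inv (B e : R) : 0 <= B -> 0 < e -> exists n : nat, B / n.+1%:R < e.
Proof.
move=> B0 e0; have be : 0 <= B / e by rewrite divr_ge0 // ltW.
exists (Num.Def.archi_bound (B / e)).
have h := archi_boundP be.
set N := Num.Def.archi_bound (B / e) in h *.
have hN : (N%:R : R) < N.+1%:R by rewrite ltr_nat.
have h2 : B / e < N.+1%:R by apply: lt_trans hN.
rewrite ltr_pdivrMr ?ltr0Sn //; rewrite ltr_pdivrMr // in h2.
by rewrite mulrC.
Qed.

Section IsSum.
Context (T : Type) (E : normedModType R).
Local Notation T' := {classic T}.

Definition is_sum (a : T -> R) (v : T -> E) (S : E) :=
  forall eps, 0 < eps -> exists2 G : seq T', uniq G &
    forall H : seq T', uniq H -> {subset G <= H} ->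
      `|S - \sum_(t <- H) a t *: v t| <= eps.

Lemma undup_sub (G1 G2 : seq T') : uniq (undup (G1 ++ G2)) /\
  {subset G1 <= undup (G1 ++ G2)} /\ {subset G2 <= undup (G1 ++ G2)}.
Proof.
split; first exact: undup_uniq.
by split => t ht; rewrite mem_undup mem_cat ht ?orbT.
Qed.

Lemma is_sum_unique a v S1 S2 : is_sum a v S1 -> is_sum a v S2 -> S1 = S2.
Proof.
move=> h1 h2; apply/eqP; rewrite -subr_eq0 -normr_le0.
apply: le0_eps => e e0.
have e2 : 0 < e / 2 by rewrite divr_gt0.
have [G1 u1 k1] := h1 _ e2; have [G2 u2 k2] := h2 _ e2.
have [uH [s1 s2]] := undup_sub G1 G2.
have b1 := k1 _ uH s1; have b2 := k2 _ uH s2.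
move: b1 b2; set s := \sum_(t <- _) _ => b1 b2.
have -> : S1 - S2 = (S1 - s) - (S2 - s) by rewrite opprB addrA subrK.
apply: (le_trans (ler_normB _ _)).
by rewrite [leRHS](splitr e); apply: lerD.
Qed.

Lemma is_sum_ext a b v S : (forall t, a t = b t) -> is_sum a v S -> is_sum b v S.
Proof.
move=> ab h e e0; have [G u k] := h e e0; exists G => // H uh sh.
under eq_bigr => t _ do rewrite -ab.
exact: k.
Qed.

Lemma is_sum_sub a b v Sa Sb : is_sum a v Sa -> is_sum b v Sb ->
  is_sum (fun t => a t - b t) v (Sa - Sb).
Proof.
move=> ha hb e e0.
have e2 : 0 < e / 2 by rewrite divr_gt0.
have [G1 u1 k1] := ha _ e2; have [G2 u2 k2] := hb _ e2.
have [uH [s1 s2]] := undup_sub G1 G2.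
exists (undup (G1 ++ G2)) => // H uh sh.
have b1 := k1 H uh (fun t ht => sh t (s1 t ht)).
have b2 := k2 H uh (fun t ht => sh t (s2 t ht)).
have -> : \sum_(t <- H) (a t - b t) *: v t =
    \sum_(t <- H) a t *: v t - \sum_(t <- H) b t *: v t.
  by rewrite -sumrB; apply: eq_bigr => t _; rewrite scalerBl.
rewrite sub4; apply: (le_trans (ler_normB _ _)).
by rewrite [leRHS](splitr e); apply: lerD.
Qed.

Lemma is_sum_scale a v S c : is_sum a v S -> is_sum (fun t => c * a t) v (c *: S).
Proof.
move=> h e e0.
have c1 : 0 < `|c| + 1 by rewrite ltr_wpDl.
have e' : 0 < e / (`|c| + 1) by rewrite divr_gt0.
have [G u k] := h _ e'; exists G => // H uh sh.
have -> : \sum_(t <- H) (c * a t) *: v t = c *: \sum_(t <- H) a t *: v t.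
  by rewrite scaler_sumr; apply: eq_bigr => t _; rewrite scalerA.
rewrite -scalerBr normrZ.
apply: le_trans (ler_wpM2l (normr_ge0 c) (k H uh sh)) _.
rewrite mulrA ler_pdivrMr // mulrDr mulr1 mulrC lerDl ltW //.
Qed.

Lemma is_sum_bound a v S C B : 0 <= B -> is_sum a v S -> fbnd a C ->
  (forall t, `|v t| <= B) -> `|S| <= B * C.
Proof.
move=> B0 h hC hB; apply/ler_addgt0Pr => e e0.
have [G u k] := h _ e0.
have b := k G u (fun t ht => ht).
move: b; set s := \sum_(t <- G) _ => b.
have hs : `|s| <= B * C.
  apply: le_trans (ler_norm_sum _ _ _) _.
  apply: (@le_trans _ _ (\sum_(t <- G) B * `|a t|)).
    apply: ler_sum => t _; rewrite normrZ mulrC; apply: ler_wpM2r => //.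
  rewrite -mulr_sumr; apply: ler_wpM2l => //; exact: hC.
have -> : S = (S - s) + s by rewrite subrK.
apply: le_trans (ler_normD _ _) _; rewrite addrC; exact: lerD.
Qed.

Lemma is_sum_delta v (j : T) : is_sum (fun t => (`[< t = j >] : bool)%:R) v (v j).
Proof.
move=> e e0; exists [:: (j : T')] => // H uh sh.
have jH : (j : T') \in H by apply: sh; rewrite mem_seq1.
rewrite (bigD1_seq (j : T')) //= asboolT // scale1r big1 ?addr0 ?subrr ?normr0 ?ltW //.
move=> t tj; rewrite asboolF ?scale0r //.
by move=> h; move: tj; rewrite h eqxx.
Qed.

Lemma is_sum_zero v : is_sum (fun _ => 0) v 0.
Proof.
move=> e e0; exists [::] => // H uh sh.
by rewrite big1 ?subrr ?normr0 ?ltW // => t _; rewrite scale0r.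
Qed.

End IsSum.

Lemma is_sum_exists (T : Type) (E : completeNormedModType R) (a : T -> R) (v : T -> E) C B :
  fbnd a C -> (forall t, `|v t| <= B) -> 0 <= B -> exists S, is_sum a v S.
Proof.
move=> hC hB B0.
pose A := [set x : R | exists2 s : seq {classic T}, uniq s & x = \sum_(t <- s) `|a t|].
have hA : has_sup A.
  split; first by exists 0, [::]; rewrite ?big_nil.
  by exists C => _ [s us ->]; exact: hC.
pose Cs := sup A.
have ACs : forall s : seq {classic T}, uniq s -> \sum_(t <- s) `|a t| <= Cs.
  by move=> s us; apply: sup_upper_bound => //; exists s.
have /choice [sq hsq] : forall n : nat, exists s : seq {classic T},
    uniq s /\ Cs - n.+1%:R^-1 < \sum_(t <- s) `|a t|.
  move=> n; have en : 0 < (n.+1%:R : R)^-1 by rewrite invr_gt0 ltr0Sn.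
  have [x [s us ->] hx] := sup_adherent en hA.
  by exists s.
pose Hs := fix Hs n := match n with 0 => undup (sq 0) | n'.+1 => undup (Hs n' ++ sq n'.+1) end.
have uHs : forall n, uniq (Hs n) by case => [|n]; exact: undup_uniq.
have sqHs : forall n, {subset sq n <= Hs n}.
  by case => [|n] t ht /=; rewrite mem_undup ?mem_cat ht ?orbT.
have HsHs : forall n m, (n <= m)%N -> {subset Hs n <= Hs m}.
  move=> n m; elim: m => [|m ih]; first by rewrite leqn0 => /eqP ->.
  rewrite leq_eqVlt => /orP [/eqP -> //|]; rewrite ltnS => nm t ht /=.
  by rewrite mem_undup mem_cat ih.
have key : forall n (H : seq {classic T}), uniq H -> {subset Hs n <= H} ->
    \sum_(t <- H | t \notin Hs n) `|a t| <= n.+1%:R^-1.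
  move=> n H uH sH.
  have e1 := sum_split_sub (fun t : {classic T} => `|a t|) (uHs n) uH sH.
  have e2 := ACs H uH.
  have e3 := sum_sub_le (f := fun t : {classic T} => `|a t|) (fun t => normr_ge0 (a t)) (proj1 (hsq n)) (uHs n) (sqHs n).
  have e4 := proj2 (hsq n).
  rewrite e1 in e2; move: e2 e3 e4.
  set x := \sum_(t <- H | _) _; set y := \sum_(t <- Hs n) _; set z := \sum_(t <- sq n) _.
  set w := (n.+1%:R)^-1; move=> ? ? ?; lra.
have diff : forall n (H : seq {classic T}), uniq H -> {subset Hs n <= H} ->
    `|\sum_(t <- H) a t *: v t - \sum_(t <- Hs n) a t *: v t| <= B / n.+1%:R.
  move=> n H uH sH.
  rewrite (sum_split_sub (fun t : {classic T} => a t *: v t) (uHs n) uH sH) addrAC subrr add0r.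
  apply: le_trans (ler_norm_sum _ _ _) _.
  apply: (@le_trans _ _ (\sum_(t <- H | t \notin Hs n) B * `|a t|)).
    by apply: ler_sum => t _; rewrite normrZ mulrC; apply: ler_wpM2r.
  by rewrite -mulr_sumr; apply: ler_wpM2l => //; exact: key.
pose u n := \sum_(t <- Hs n) a t *: v t.
have [S hS] : exists S, forall n, `|S - u n| <= B / n.+1%:R.
  apply: banach_seq.
    by move=> n m nm; apply: diff => //; exact: HsHs.
  by move=> e e0; exact: archi_inv.
exists S => e e0.
have e2 : 0 < e / 2 by rewrite divr_gt0.
have [n hn] := archi_inv B0 e2.
exists (Hs n) => // H uH sH.
have h1 := hS n; have h2 := diff n H uH sH.
have -> : S - \sum_(t <- H) a t *: v t = (S - u n) - (\sum_(t <- H) a t *: v t - u n).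
  by rewrite opprB addrA subrK.
apply: (le_trans (ler_normB _ _)).
rewrite [leRHS](splitr e); apply: lerD; apply: le_trans (ltW hn) => //.
Qed.

Lemma inf_eq (S : set R) m : S m -> lbound S m -> inf S = m.
Proof.
move=> Sm lb; apply/eqP; rewrite eq_le; apply/andP; split.
  by apply: ge_inf => //; exists m.
by apply: lb_le_inf => //; exists m.
Qed.

Section II_I.
Context (X I : Type) (d : X -> X -> R) (x0 : X) (xs ys : I -> X) (M : R)
  (dm : is_metric d) (xy : forall i, xs i <> ys i) (i0 : I).

Lemma valid_ge1 (K : R) :
  (forall w : I -> R^o, (forall i, `|w i| <= 1) ->
     exists g : X -> R^o, in_Lip0 d x0 g /\ lip_le d g K /\ interp_eq d xs ys g w) ->
  1 <= K.
Proof.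
move=> h; have w1 : forall i : I, `|(fun _ => 1 : R^o) i| <= 1 by move=> i; rewrite normr1.
have [g [_ [gl gi]]] := h (fun _ => 1) w1.
have l := gl _ _ (@xy i0); have e := gi i0.
have dp := d_gt0 dm (@xy i0); have dn : d (xs i0) (ys i0) != 0 by rewrite gt_eqF.
move: l e; set D := g (xs i0) - g (ys i0); set dd := d (xs i0) (ys i0) => l e.
have eD : D = dd.
  rewrite -[D]mul1r -(mulfV dn) -mulrA; rewrite /GRing.scale /= in e.
  by rewrite e mulr1.
by move: l; rewrite eD (ger0_norm (ltW dp)) (mulfV dn).
Qed.

Variable fs : I -> X -> R.
Hypothesis hB : beurling_set d x0 xs ys M fs.

Lemma beur_fbnd x y : fbnd (fun i => fs i x - fs i y) (M * d x y).
Proof.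
case: hB => P1 [P2 P3].
have [->|nxy] := pselect (x = y).
  move=> s _; rewrite d_xx // mulr0 big1 // => i _; by rewrite subrr normr0.
apply/fbnd_inj => n g gi; have := P3 x y nxy n g gi.
by rewrite -mulr_suml ler_pdivrMr // d_gt0.
Qed.

Lemma beur_M1 : 1 <= M.
Proof.
case: hB => P1 [P2 P3].
have h := fbnd_le1 i0 (beur_fbnd (xs i0) (ys i0)).
have dp := d_gt0 dm (@xy i0).
have e := P2 i0 i0; rewrite asboolT // in e.
have dn : d (xs i0) (ys i0) != 0 by rewrite gt_eqF.
move: h e; set D := fs i0 (xs i0) - fs i0 (ys i0); set dd := d (xs i0) (ys i0) => h e.
have eD : D = dd by rewrite -(divfK dn D) e mul1r.
move: h; rewrite eD (ger0_norm (ltW dp)) => h.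
by rewrite -(ler_pM2r dp) mul1r.
Qed.

Lemma beur_build (E : completeNormedModType R) (v : I -> E) B :
  0 <= B -> (forall i, `|v i| <= B) ->
  exists f : X -> E, in_Lip0 d x0 f /\ lip_le d f (B * M) /\ interp_eq d xs ys f v.
Proof.
move=> B0 hv; case: hB => P1 [P2 P3].
have /choice [F hF] : forall x, exists S, is_sum (fun i => fs i x) v S.
  move=> x; apply: (is_sum_exists (C := M * d x x0) (B := B)) => //.
  by move=> s us; have := beur_fbnd x x0 us; under eq_bigr => i _ do rewrite P1 subr0.
have hD : forall x y, is_sum (fun i => fs i x - fs i y) v (F x - F y).
  by move=> x y; apply: is_sum_sub.
exists F; split; [|split].
- split; last first.
    exists (B * M) => x y nxy; rewrite ler_pdivrMr ?d_gt0 // -mulrA.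
    exact: (is_sum_bound B0 (hD x y) (beur_fbnd x y) hv).
  apply: (is_sum_unique (hF x0)); apply: is_sum_ext; last exact: is_sum_zero.
  by move=> i; rewrite P1.
- move=> x y nxy; rewrite ler_pdivrMr ?d_gt0 // -mulrA.
  exact: (is_sum_bound B0 (hD x y) (beur_fbnd x y) hv).
- move=> j; have := is_sum_scale (d (xs j) (ys j))^-1 (hD (xs j) (ys j)).
  move=> h1; apply: (is_sum_unique h1); apply: is_sum_ext; last exact: is_sum_delta.
  by move=> i /=; rewrite mulrC P2.
Qed.

End II_I.

Lemma dir_ii_i (X I : Type) (d : X -> X -> R) (x0 : X) (xs ys : I -> X) (M : R)
  (dm : is_metric d) (xy : forall i, xs i <> ys i) (i0 : I)
  (hM : M = interp_const_R d x0 xs ys) (fs : I -> X -> R)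
  (hB : beurling_set d x0 xs ys M fs) :
  forall E : completeNormedModType R, (exists e : E, e <> 0) ->
      lip_interpolating d x0 xs ys E /\ interp_const d x0 xs ys E = M.
Proof.
move=> E [e e0].
have M1 := @beur_M1 X I d x0 xs ys M dm xy i0 fs hB.
split.
  move=> v [B hv]; have B0 : 0 <= B := le_trans (normr_ge0 (v i0)) (hv i0).
  have [f [f1 [_ f2]]] := @beur_build X I d x0 xs ys M dm fs hB E v B B0 hv.
  by exists f.
rewrite /interp_const; apply: inf_eq.
  split; first exact: lt_le_trans ltr01 M1.
  move=> v hv; have := @beur_build X I d x0 xs ys M dm fs hB E v 1 ler01 hv.
  by rewrite mul1r.
move=> K [K0 hK].
have hR := @valid_E_R X I d x0 xs ys dm xy E e K e0 hK.
have K1 := @valid_ge1 X I d x0 xs ys dm xy i0 K hR.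
rewrite hM; apply: ge_inf; last by split.
by exists 1 => k [k1 _].
Qed.

Lemma sumc (T : Type) (s : seq T) (c : R) : \sum_(t <- s) c = c * (size s)%:R.
Proof. by elim: s => [|a s ih]; rewrite ?big_nil ?mulr0 // big_cons ih /= -nat1r mulrDr mulr1. Qed.


Section L1.
Variable T : Type.
Local Notation T' := {classic T}.

Definition l1_pred : {pred T -> R^o} := fun u => `[< exists C, fbnd u C >].
Record l1 := L1 { l1v : T -> R^o; l1P : l1v \in l1_pred }.
HB.instance Definition _ := [isSub for l1v].
HB.instance Definition _ := [Choice of l1 by <:].

Lemma l1_closed : submod_closed l1_pred.
Proof.
split.
  by apply/asboolP; exists 0 => s _; rewrite big1 // => t _; rewrite normr0.
move=> c u v /asboolP [Cu hu] /asboolP [Cv hv]; apply/asboolP.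
exists (`|c| * Cu + Cv) => s us.
apply: (@le_trans _ _ (\sum_(t <- s) (`|c| * `|u t| + `|v t|))).
  apply: ler_sum => t _; apply: (le_trans (ler_normD _ _)).
  by rewrite /= normrM.
by rewrite big_split /= -mulr_sumr lerD // ?ler_wpM2l // (hu s us, hv s us).
Qed.

HB.instance Definition _ := GRing.isSubmodClosed.Build R (T -> R^o) l1_pred l1_closed.
HB.instance Definition _ := [SubChoice_isSubLmodule of l1 by <:].


Lemma l1vD (u v : l1) t : l1v (u + v) t = l1v u t + l1v v t. Proof. by []. Qed.
Lemma l1vZ c (u : l1) t : l1v (c *: u) t = c * l1v u t. Proof. by []. Qed.
Lemma l1v0 t : l1v (0 : l1) t = 0. Proof. by []. Qed.
Lemma l1vN (u : l1) t : l1v (- u) t = - l1v u t. Proof. by []. Qed.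

Definition l1S (u : T -> R) : set R :=
  [set x | exists2 s : seq T', uniq s & x = \sum_(t <- s) `|u t|].
Definition l1n (u : l1) : R := sup (l1S (l1v u)).

Lemma l1S_sup (u : l1) : has_sup (l1S (l1v u)).
Proof.
have /asboolP [C hC] := l1P u.
split; first by exists 0, [::]; rewrite ?big_nil.
by exists C => _ [s us ->]; exact: hC.
Qed.

Lemma l1n_ge (u : l1) (s : seq T') : uniq s -> \sum_(t <- s) `|l1v u t| <= l1n u.
Proof. by move=> us; apply: sup_upper_bound; [exact: l1S_sup | exists s]. Qed.

Lemma l1n_fbnd (u : l1) : fbnd (l1v u) (l1n u).
Proof. by move=> s us; exact: l1n_ge. Qed.

Lemma l1n_le (u : l1) C : fbnd (l1v u) C -> l1n u <= C.
Proof.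
move=> h; apply: ge_sup; first by exists 0, [::]; rewrite ?big_nil.
by move=> _ [s us ->]; exact: h.
Qed.

Lemma l1n_ge0 (u : l1) : 0 <= l1n u.
Proof. by have := l1n_ge u (s := [::]) isT; rewrite big_nil. Qed.

Lemma l1n_coord (u : l1) t : `|l1v u t| <= l1n u.
Proof. by have := l1n_ge u (s := [:: (t : T')]) isT; rewrite big_seq1. Qed.

Lemma l1n_triangle (u v : l1) : l1n (u + v) <= l1n u + l1n v.
Proof.
apply: l1n_le => s us.
apply: (@le_trans _ _ (\sum_(t <- s) (`|l1v u t| + `|l1v v t|))).
  by apply: ler_sum => t _; rewrite l1vD; exact: ler_normD.
by rewrite big_split /=; apply: lerD; exact: l1n_ge.
Qed.

Lemma l1n_scale_le c (u : l1) : l1n (c *: u) <= `|c| * l1n u.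
Proof.
apply: l1n_le => s us.
under eq_bigr => t _ do rewrite l1vZ normrM.
by rewrite -mulr_sumr; apply: ler_wpM2l => //; exact: l1n_ge.
Qed.

Lemma l1n_scale c (u : l1) : l1n (c *: u) = `|c| * l1n u.
Proof.
apply/eqP; rewrite eq_le l1n_scale_le /=.
have [->|c0] := eqVneq c 0; first by rewrite normr0 mul0r l1n_ge0.
have := l1n_scale_le c^-1 (c *: u); rewrite scalerA mulVf // scale1r.
rewrite normrV ?unitfE // => h.
have cp : 0 < `|c| by rewrite normr_gt0.
by rewrite -ler_pdivlMl.
Qed.

Lemma l1n_eq0 (u : l1) : l1n u = 0 -> u = 0.
Proof.
move=> h; apply: val_inj; apply: funext => t /=.
apply/eqP; rewrite -normr_le0 -h; exact: l1n_coord.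
Qed.

HB.instance Definition _ := Lmodule_isNormed.Build R l1 l1n_triangle l1n_scale l1n_eq0.


Lemma l1_normE (u : l1) : `|u| = l1n u. Proof. by []. Qed.

Lemma l1_complete (F : set_system l1) : ProperFilter F -> cauchy F -> cvg F.
Proof.
move=> FF /(cauchyP F) hc.
have /choice [p hp] : forall n : nat, exists x : l1, F (ball x n.+1%:R^-1).
  by move=> n; apply: hc; rewrite invr_gt0 ltr0Sn.
have pp : forall n m, `|p n - p m| < n.+1%:R^-1 + m.+1%:R^-1.
  move=> n m; have [z [h1 h2]] := filter_ex (filterI (hp n) (hp m)).
  rewrite -ball_normE /ball_ /= in h1 h2.
  apply: le_lt_trans (ler_distD z _ _) _.
  by rewrite (distrC z); apply: ltrD.
have inv_le : forall n m, (n <= m)%N -> (m.+1%:R : R)^-1 <= n.+1%:R^-1.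
  by move=> n m nm; rewrite lef_pV2 ?posrE ?ltr0Sn // ler_nat ltnS.
have pc : forall n m, (n <= m)%N -> `|p m - p n| <= 2 / n.+1%:R.
  move=> n m nm; apply: ltW; apply: lt_le_trans (pp m n) _.
  by rewrite mulr2n mulrDl !mul1r lerD2r inv_le.
have /choice [L hL] : forall t, exists S : R^o, forall n, `|S - l1v (p n) t| <= 2 / n.+1%:R.
  move=> t; apply: (@banach_seq R^o (fun n => l1v (p n) t) (fun n => 2 / n.+1%:R)).
    move=> n m nm; apply: le_trans (pc n m nm).
    by have := l1n_coord (p m - p n) t; rewrite l1vD l1vN.
  by move=> e e0; apply: archi_inv.
have hs : forall n (s : seq T'), uniq s ->
    \sum_(t <- s) `|L t - l1v (p n) t| <= 2 / n.+1%:R.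
  move=> n s us; apply/ler_addgt0Pr => e e0.
  have [m0 hm0] := archi_inv (B := 2 * (size s)%:R) (mulr_ge0 (ler0n _ _) (ler0n _ _)) e0.
  pose m := maxn m0 n.
  apply: (@le_trans _ _ (\sum_(t <- s) (2 / m.+1%:R + `|l1v (p m) t - l1v (p n) t|))).
    apply: ler_sum => t _; apply: le_trans (ler_distD (l1v (p m) t) _ _) _.
    by apply: lerD => //; exact: hL.
  rewrite big_split /= sumc addrC; apply: lerD.
    apply: le_trans (l1n_ge (p m - p n) us) _.
    rewrite -l1_normE; exact: pc (leq_maxr _ _).
  apply: ltW; apply: le_lt_trans hm0; rewrite [leLHS]mulrAC.
  apply: ler_wpM2l; first by rewrite mulr_ge0.
  exact: inv_le (leq_maxl _ _).
have Lp : L \in l1_pred.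
  apply/asboolP; exists (2 / 1%:R + l1n (p 0)) => s us.
  apply: (@le_trans _ _ (\sum_(t <- s) (`|L t - l1v (p 0) t| + `|l1v (p 0) t|))).
    apply: ler_sum => t _.
    by have := ler_normD (L t - l1v (p 0) t) (l1v (p 0) t); rewrite subrK.
  by rewrite big_split /=; apply: lerD; [exact: hs | exact: l1n_ge].
pose Lv : l1 := L1 Lp.
have hLv : forall n, `|Lv - p n| <= 2 / n.+1%:R.
  move=> n; rewrite l1_normE; apply: l1n_le => s us.
  by under eq_bigr => t _ do rewrite l1vD l1vN; exact: hs.
apply/cvg_ex; exists Lv => A /nbhs_ballP [e e0 hA].
have e3 : 0 < e / 3%:R by rewrite divr_gt0.
have [n hn] := archi_inv (B := 1) ler01 e3.
apply: filterS (hp n) => z hz; apply: hA.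
rewrite -ball_normE /ball_ /= in hz *.
apply: le_lt_trans (ler_distD (p n) _ _) _.
apply: (@lt_le_trans _ _ (2 / n.+1%:R + n.+1%:R^-1)); first by rewrite ler_ltD // hLv.
move: hn; set w := n.+1%:R^-1 => hn; lra.
Qed.

HB.instance Definition _ := Uniform_isComplete.Build l1 l1_complete.

End L1.

Check (fun T => l1 T : completeNormedModType R).

Lemma geom_sum N : \sum_(0 <= i < N) (2%:R^-1 : R) ^+ i + 2%:R * 2%:R^-1 ^+ N = 2%:R.
Proof.
elim: N => [|N ih]; first by rewrite big_geq // add0r expr0 mulr1.
rewrite big_nat_recr //= -addrA exprS.
have -> : (2%:R^-1 : R) ^+ N + 2%:R * (2%:R^-1 * 2%:R^-1 ^+ N) = 2%:R * 2%:R^-1 ^+ N.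
  have h2 : (2%:R : R) / 2%:R = 1 by rewrite mulfV // pnatr_eq0.
  by rewrite mulrA h2 mul1r mulr_natl mulr2n.
exact: ih.
Qed.

Lemma fbnd_geom (a : nat -> R) : (forall n, `|a n| <= 2%:R^-1 ^+ n) -> fbnd a 2%:R.
Proof.
move=> ha s0 us0.
pose s := map (fun t : {classic nat} => t : nat) s0.
have us : uniq s by rewrite map_inj_uniq.
have -> : \sum_(t <- s0) `|a t| = \sum_(t <- s) `|a t| by rewrite big_map.
pose N := (\max_(t <- s) t).+1.
have sN : {subset s <= index_iota 0 N}.
  move=> t ts; rewrite mem_index_iota /= ltnS.
  exact: leq_bigmax_seq.
apply: le_trans (ler_sum _ (fun t _ => ha t)) _.
apply: le_trans (sum_sub_le (f := fun t => (2%:R^-1 : R) ^+ t) _ us (iota_uniq _ _) sN) _.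
  by move=> t; rewrite exprn_ge0 // invr_ge0.
have h := geom_sum N.
have h0 : 0 <= (2%:R : R) * 2%:R^-1 ^+ N by rewrite mulr_ge0 // exprn_ge0 // invr_ge0.
move: h h0; set S := \sum_(_ <= _ < _) _; set q := _ * _ ^+ N => h h0; lra.
Qed.

Section delta.
Variable T : Type.
Lemma fbnd_delta (j : T) : fbnd (fun t : T => (`[< t = j >] : bool)%:R : R^o) 1.
Proof.
move=> s us.
have [js|njs] := boolP ((j : {classic T}) \in s).
  rewrite (bigD1_seq (j : {classic T})) //= asboolT // normr1 big1 ?addr0 //.
  move=> t tj; rewrite asboolF ?normr0 //.
  by move=> h; move: tj; rewrite h eqxx.
rewrite big_seq big1 ?ler01 // => t ts; rewrite asboolF ?normr0 //.
by move=> h; move: njs; rewrite -h ts.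
Qed.

Definition l1delta (j : T) : l1 T := @L1 T _ (asboolT (ex_intro _ _ (fbnd_delta j))).
Lemma l1delta_v j t : l1v (l1delta j) t = (`[< t = j >] : bool)%:R. Proof. by []. Qed.
Lemma l1delta_norm j : `|l1delta j| <= 1.
Proof. by rewrite l1_normE; apply: l1n_le; exact: fbnd_delta. Qed.
Lemma l1delta_neq0 j : l1delta j <> 0.
Proof.
move=> h; have := l1delta_v j j; rewrite h l1v0 asboolT // => /eqP.
by rewrite eq_sym oner_eq0.
Qed.
End delta.

Section PartA.
Context (X I : Type) (d : X -> X -> R) (x0 : X) (xs ys : I -> X)
  (dm : is_metric d) (xy : forall i, xs i <> ys i) (i0 : I).

Lemma pow2_ge (K : R) : exists n : nat, K <= 2%:R ^+ n.
Proof.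
have [K0|K0] := lerP K 0.
  by exists 0%N; rewrite expr0 (le_trans K0 ler01).
exists (Num.Def.archi_bound K).
apply: le_trans (ltW (archi_boundP (ltW K0))) _.
rewrite -natrX ler_nat; apply: ltnW; exact: ltn_expl.
Qed.

Lemma Rset_ne : lip_interpolating d x0 xs ys (l1 nat) ->
  exists K, interp_set d x0 xs ys R^o (fun K => 1 <= K) K.
Proof.
move=> hint; apply: contrapT => hne.
have hv : forall n : nat, exists v : I -> R^o, (forall i, `|v i| <= 1) /\
    ~ exists f : X -> R^o, in_Lip0 d x0 f /\ lip_le d f (2%:R ^+ n * 2%:R ^+ n) /\
         interp_eq d xs ys f v.
  move=> n; apply: contrapT => h; apply: hne; exists (2%:R ^+ n * 2%:R ^+ n); split.
    by rewrite mulr_ege1 // exprn_ege1 // ler1n.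
  move=> v v1; apply: contrapT => hf; apply: h; exists v; split => //.
have /choice [v hvn] := hv.
pose q := (2%:R^-1 : R).
have q0 : 0 <= q by rewrite invr_ge0.
have hqv : forall n i, `|q ^+ n * v n i| <= q ^+ n.
  move=> n i; rewrite normrM (ger0_norm (exprn_ge0 n q0)).
  rewrite -[X in _ <= X]mulr1; apply: ler_wpM2l; first exact: exprn_ge0.
  exact: (proj1 (hvn n)).
have hVi : forall i, fbnd (fun n => q ^+ n * v n i : R^o) 2%:R.
  by move=> i; apply: fbnd_geom => n; exact: hqv.
pose V i : l1 nat := @L1 nat _ (asboolT (ex_intro _ _ (hVi i))).
have [F [[F0 [K FK]] Fi]] : exists F : X -> l1 nat, in_Lip0 d x0 F /\ interp_eq d xs ys F V.
  apply: hint; exists 2%:R => i; rewrite l1_normE; apply: l1n_le; exact: hVi.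
have [n Kn] := pow2_ge K.
apply: (proj2 (hvn n)).
pose g x : R^o := 2%:R ^+ n * l1v (F x) n.
have e2 : (2%:R : R) ^+ n * q ^+ n = 1.
  by rewrite -exprMn mulfV ?expr1n // pnatr_eq0.
have p0 : (0 : R) <= 2%:R ^+ n by rewrite exprn_ge0.
have gl : forall x y, x <> y -> `|g x - g y| / d x y <= 2%:R ^+ n * K.
  move=> x y nxy.
  rewrite /g -mulrBr normrM (ger0_norm p0) -mulrA; apply: ler_wpM2l => //.
  apply: le_trans (FK x y nxy); apply: ler_wpM2r; first by rewrite invr_ge0 d_ge0.
  by have := l1n_coord (F x - F y) n; rewrite l1vD l1vN.
exists g; split; [|split].
- split; first by rewrite /g F0 l1v0 mulr0.
  by exists (2%:R ^+ n * K).
- move=> x y nxy; apply: le_trans (gl x y nxy) _.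
  by apply: ler_wpM2l.
- move=> i; have := Fi i; move/(congr1 (fun u : l1 nat => l1v u n)).
  rewrite l1vZ l1vD l1vN /= => h.
  rewrite /g /GRing.scale /= -mulrBr mulrCA h mulrA e2 mul1r //.
Qed.
End PartA.

Section PartB.
Context (X I : Type) (d : X -> X -> R) (x0 : X) (xs ys : I -> X) (M : R)
  (dm : is_metric d) (xy : forall i, xs i <> ys i) (i0 : I).

Lemma approx_beur :
  (forall E : completeNormedModType R, (exists e : E, e <> 0) ->
      lip_interpolating d x0 xs ys E /\ interp_const d x0 xs ys E = M) ->
  1 <= M -> forall eps : R, 0 < eps ->
  exists fs : I -> X -> R, (forall i, fs i x0 = 0) /\
   (forall i j, (fs i (xs j) - fs i (ys j)) / d (xs j) (ys j) = (`[< i = j >] : bool)%:R) /\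
   (forall x y, x <> y -> fbnd (fun i => fs i x - fs i y) ((M + eps) * d x y)).
Proof.
move=> hi M1 eps eps0.
have [_ hc] := hi (l1 I) (ex_intro _ (l1delta i0) (@l1delta_neq0 I i0)).
move: hc; rewrite /interp_const; set S := interp_set _ _ _ _ _ _ => hc.
have Sne : S !=set0.
  apply: contrapT => hn; move: hc; rewrite inf_out; last by case.
  by move=> h; move: M1; rewrite -h ler10.
have Sinf : has_inf S by split => //; exists 0 => k [k0 _]; exact: ltW.
have [K [K0 hK] KM] := inf_adherent eps0 Sinf; rewrite hc in KM.
have [F [[F0 _] [FK Fi]]] := hK (fun j => l1delta j) (fun j => l1delta_norm j).
exists (fun i x => l1v (F x) i); split; [|split].
- by move=> i; rewrite F0.
- move=> i j; have := Fi j; move/(congr1 (fun u : l1 I => l1v u i)).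
  by rewrite l1vZ l1vD l1vN l1delta_v /= mulrC.
- move=> x y nxy s us.
  have dp := d_gt0 dm nxy.
  apply: le_trans (l1n_ge (F x - F y) us) _.
  rewrite -l1_normE; have := FK x y nxy; rewrite ler_pdivrMr // => h.
  apply: le_trans h _; apply: ler_wpM2r; first exact: ltW.
  exact: ltW.
Qed.
End PartB.

Module PartCmod.
Import ArrowAsProduct.

Lemma clust_le (T : topologicalType) (F : set_system T) (g : T) (phi : T -> R) (c : R) :
  cluster F g -> {for g, continuous phi} -> F [set p | phi p <= c] -> phi g <= c.
Proof.
move=> cl cphi hF; rewrite leNgt; apply/negP => cg.
have e0 : 0 < phi g - c by rewrite subr_gt0.
have nb : nbhs g (phi @^-1` ball (phi g) (phi g - c)) := cphi _ (nbhsx_ballx _ _ e0).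
have [p [hp1 hp2]] := cl _ _ hF nb.
move: hp2 => /=; rewrite /ball /= ltr_norml => /andP [_ h].
move: hp1; rewrite /=; lra.
Qed.

Lemma cont_sum (T : topologicalType) (x : T) n (F : 'I_n -> T -> R) :
  (forall k, {for x, continuous (F k)}) ->
  {for x, continuous (fun p => \sum_(k < n) F k p)}.
Proof.
elim: n F => [|n ih] F hF.
  have -> : (fun p => \sum_(k < 0) F k p) = (fun=> 0) by apply: funext => p; rewrite big_ord0.
  exact: cst_continuous.
have -> : (fun p => \sum_(k < n.+1) F k p) =
    (fun p => \sum_(k < n) F (widen_ord (leqnSn n) k) p) + F ord_max.
  by apply: funext => p; rewrite big_ord_recr.
apply: (@continuousD R R^o); last exact: hF.
by apply: ih => k; exact: hF.
Qed.

Section PartC.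
Context (X I : Type) (d : X -> X -> R) (x0 : X) (xs ys : I -> X) (M : R)
  (dm : is_metric d) (M0 : 0 <= M).

Local Notation J := {classic (I * X)}.

Lemma limit_beur :
  (forall n : nat, exists fs : I -> X -> R, (forall i, fs i x0 = 0) /\
   (forall i j, (fs i (xs j) - fs i (ys j)) / d (xs j) (ys j) = (`[< i = j >] : bool)%:R) /\
   (forall x y, x <> y -> fbnd (fun i => fs i x - fs i y) ((M + n.+1%:R^-1) * d x y))) ->
  exists fs, beurling_set d x0 xs ys M fs.
Proof.
move=> /choice [hs hhs].
pose H (n : nat) : forall j : J, R := fun j => hs n j.1 j.2.
pose Bd (j : J) := (M + 1) * d j.2 x0.
pose A (j : J) : set R := `[- Bd j, Bd j]%classic.
have cA : compact [set p : forall j : J, R | forall j, A j (p j)].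
  by apply: tychonoff => j; exact: segment_compact.
pose Fl := H @ \oo.
have FlA : Fl [set p : forall j : J, R | forall j, A j (p j)].
  exists 0%N => // n _ j; rewrite /A /= in_itv /= -ler_norml.
  have [P1 [_ P3]] := hhs n.
  rewrite /H /Bd; case: j => i x /=.
  have [->|nx] := pselect (x = x0); first by rewrite P1 normr0 d_xx // mulr0.
  have := fbnd_le1 i (P3 x x0 nx); rewrite P1 subr0 => h; apply: le_trans h _.
  apply: ler_wpM2r; first exact: d_ge0.
  by rewrite lerD2l invf_le1 ?ltr0Sn // ler1n.
have [g [_ clg]] := cA Fl (fmap_proper_filter _ _) FlA.
have pc : forall j : J, continuous (fun p : forall j : J, R => p j).
  by move=> j; exact: (@proj_continuous J (fun _ => R) j).
have eq_lim : forall (phi : (forall j : J, R) -> R) c, {for g, continuous phi} ->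
    (forall n, phi (H n) = c) -> phi g = c.
  move=> phi c cphi hc; apply/eqP; rewrite eq_le; apply/andP; split.
    by apply: (clust_le clg cphi); exists 0%N => // n _ /=; rewrite hc.
  rewrite -lerN2; apply: (clust_le (phi := fun p => - phi p) clg).
    exact: (@continuousN R R^o).
  by exists 0%N => // n _ /=; rewrite hc.
exists (fun i x => g ((i, x) : J)); split; [|split].
- move=> i; apply: (eq_lim (fun p => p ((i, x0) : J))); first exact: pc.
  by move=> n; rewrite /H /= (proj1 (hhs n)).
- move=> i j.
  apply: (eq_lim (fun p => (p ((i, xs j) : J) - p ((i, ys j) : J)) / d (xs j) (ys j))).
    apply: (@continuousM R); last exact: cst_continuous.
    by apply: (@continuousB R R^o); apply: pc.
  by move=> n; rewrite /H /= (proj1 (proj2 (hhs n))).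
- move=> x y nxy n gi ginj.
  have dp := d_gt0 dm nxy.
  pose phi (p : forall j : J, R) := \sum_(k < n) `|p ((gi k, x) : J) - p ((gi k, y) : J)| / d x y.
  have cphi : {for g, continuous phi}.
    apply: cont_sum => k; apply: (@continuousM R); last exact: cst_continuous.
    apply: (continuous_comp (f := fun p : forall j : J, R => p ((gi k, x) : J) - p ((gi k, y) : J))).
      by apply: (@continuousB R R^o); apply: pc.
    exact: (@norm_continuous R R^o).
  apply/ler_addgt0Pr => e e0.
  have [N hN] := archi_inv ler01 e0.
  apply: (clust_le clg cphi); exists N => // m hm /=.
  have := (proj2 (proj2 (hhs m))) x y nxy.
  move/fbnd_inj => /(_ n gi ginj) h.
  rewrite /phi -mulr_suml ler_pdivrMr //; apply: le_trans h _.
  apply: ler_wpM2r; first exact: ltW.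
  rewrite lerD2l; apply: le_trans (ltW hN); rewrite mul1r.
  by rewrite lef_pV2 ?posrE ?ltr0Sn // ler_nat ltnS.
Qed.
End PartC.

End PartCmod.
Import PartCmod.

Unset Implicit Arguments.
Set Strict Implicit.
Set Printing Implicit Defensive.

Theorem theorem5p4 (X : Type) (d : X -> X -> RR) (x0 : X) (I : Type)
  (xs ys : I -> X) (M : RR) :
  is_metric d ->
  (forall i, xs i <> ys i) ->
  inhabited I ->
  lip_interpolating d x0 xs ys RR^o ->
  M = interp_const_R d x0 xs ys ->
  ((forall E : completeNormedModType RR, (exists e : E, e <> 0) ->
      lip_interpolating d x0 xs ys E /\ interp_const d x0 xs ys E = M)
   <->
   (exists fs : I -> X -> RR, beurling_set d x0 xs ys M fs)).
Proof.
move=> dm xy [i0] _ hM; split.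
  move=> hi.
  have hl1 := (hi (l1 nat) (ex_intro _ (l1delta 0%N) (@l1delta_neq0 nat 0%N))).1.
  have [K hK] := Rset_ne dm hl1.
  have M1 : 1 <= M.
    by rewrite hM; apply: lb_le_inf; [exists K | move=> k [k1 _]].
  apply: (limit_beur dm) => n.
  apply: (approx_beur dm i0 hi M1).
  by rewrite invr_gt0 ltr0Sn.
move=> [fs hB]; exact: (dir_ii_i dm xy i0 hM hB).
Qed.
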